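(* For every $n\ge1$, \[\widehat C_n=F(X_0,\dots,X_{n-2})+\frac{(-1)^{n-1}}{(n-1)!}X_{n-1},\] where $F$ is a polynomial with rational coefficients (depending on $n$) of total degree at most $n$.
   Context: Polynomials $S_i(n)$: let $a_0,a_1,\dots$ be indeterminates, $a(x)=\sum_{i\ge0}a_ix^i$; for a positive integer $j$ set $G(x)=\prod_{i=0}^{j-1}\frac{1+a(x)x^2}{1+ix}$, $H(x)=\prod_{i=1-j}^{-1}\frac{1+ix}{1+a(x)x^2}$, $u=2j-1$, $v=j(j-1)$. For each $n\ge1$ there are unique $S_0(n),\dots,S_n(n)\in\mathbb{Q}[a_0,\dots,a_{n-2}]$, independent of $j$, with: for every positive integer $j$ the coefficient of $x^{n-1}$ in $\frac{G(x)-H(x)}{x^2}(1+a(x)x^2)$ equals $u(a_{n-1}+S_0(n)+\sum_{i=1}^nS_i(n)v^i)$. Write $S_i(n)(c_1,\dots,c_{n-1})$ for the substitution $a_k=c_{k+1}$. Recursion: $X_0,X_1,\dots$ are indeterminates, $D$ is the $\mathbb{Q}$-linear derivation of $\mathbb{Q}[X_0,X_1,\dots]$ with $D(X_k)=X_{k+1}$, $P_1=X_0$, $P_{m+1}=D(P_m)-3X_0P_m$, and for $m\ge1$ \[\widehat C_m=-S_0(m)(\widehat C_1,\dots,\widehat C_{m-1})+\sum_{i=1}^m3\cdot2^iS_i(m)(\widehat C_1,\dots,\widehat C_{m-1})P_i.\] *)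

(* Defs.v *)
From HB Require Import structures.
From mathcomp Require Import all_boot all_order all_algebra.
From mathcomp Require Import finmap.
From mathcomp.multinomials Require Import monalg.

Set Implicit Arguments.
Unset Strict Implicit.
Unset Printing Implicit Defensive.

Import Order.TTheory GRing.Theory Num.Theory.
Local Open Scope ring_scope.

(* Q[Y_0, Y_1, ...] : polynomials with rational coefficients in the
   countably many indeterminates Y_k (k : nat).  Used both for
   Q[a_0, a_1, ...] (Y_k = a_k) and for Q[X_0, X_1, ...] (Y_k = X_k). *)
Definition Pinf := {malg rat[{cmonom nat}]}.

Definition mvar (k : nat) : Pinf := << (1 : rat) *g (ucm k) >>.

Definition vars_below (k : nat) (p : Pinf) : Prop :=
  forall mo, mo \in msupp p -> forall i, i \in finsupp mo -> (i < k)%N.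

(* total degree: msize p = 1 + total degree (msize 0 = 0) *)
Definition tot_deg_le (d : nat) (p : Pinf) : Prop := (msize p <= d.+1)%N.

(* a power series is represented by its truncation below x^N *)
Definition trunc (N : nat) (p : {poly Pinf}) : {poly Pinf} := \poly_(k < N) p`_k.

(* 1 / (1 + q) for q with zero constant term, truncated below x^N *)
Definition sinv (N : nat) (q : {poly Pinf}) : {poly Pinf} :=
  trunc N (\sum_(k < N) (- q) ^+ k).

Definition aser (N : nat) : {poly Pinf} := \poly_(k < N) mvar k.

Definition Gser (N j : nat) : {poly Pinf} :=
  trunc N (\prod_(i < j) ((1 + aser N * 'X^2) * sinv N ((i%:R : Pinf) *: 'X))).

(* H(x) = prod_(i=1-j)^(-1) (1 + i x) / (1 + a(x) x^2);
   the index i = -(k+1), k = 0 .. j-2 *)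
Definition Hser (N j : nat) : {poly Pinf} :=
  trunc N (\prod_(k < j.-1)
     ((1 - ((k.+1)%:R : Pinf) *: 'X) * sinv N (aser N * 'X^2))).

(* coefficient of x^(n-1) in ((G(x) - H(x)) / x^2) (1 + a(x) x^2),
   i.e. coefficient of x^(n+1) in (G(x) - H(x)) (1 + a(x) x^2);
   truncation below x^(n+2) does not affect it. *)
Definition coefGH (n j : nat) : Pinf :=
  let N := n.+2 in ((Gser N j - Hser N j) * (1 + aser N * 'X^2))`_n.+1.

(* S n i stands for S_i(n).  Defining property of S_0(n), ..., S_n(n). *)
Definition S_spec (S : nat -> nat -> Pinf) (n : nat) : Prop :=
  (forall i, (i <= n)%N -> vars_below n.-1 (S n i)) /\
  (forall j : nat, (0 < j)%N ->
     coefGH n j =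
     ((2 * j - 1)%N%:R : Pinf) *
       (mvar n.-1 + S n 0%N +
        \sum_(1 <= i < n.+1) S n i * (((j * (j - 1))%N%:R : Pinf) ^+ i))).

(* the derivation D with D(X_k) = X_(k+1), on monomials:
   D(X^mo) = sum_k mo_k X^(mo - e_k) X_(k+1) *)
Definition Dmon (mo : {cmonom nat}) : Pinf :=
  \sum_(k <- finsupp mo)
     << ((mo k)%:R : rat) *g divcm mo (ucm k) >> * mvar k.+1.

Definition D (p : Pinf) : Pinf := \sum_(mo <- msupp p) p@_mo *: Dmon mo.

(* P_1 = X_0, P_(m+1) = D(P_m) - 3 X_0 P_m *)
Definition P (m : nat) : Pinf :=
  iter m.-1 (fun p => D p - 3%:R * mvar 0 * p) (mvar 0).

(* substitution a_k := c`_k (c = [:: C_1; ...; C_(m-1)], so a_k := C_(k+1)) *)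
Definition subst (c : seq Pinf) (p : Pinf) : Pinf :=
  mmap (fun q : rat => q%:MP)
       (fun mo : {cmonom nat} => \prod_(k <- finsupp mo) (c`_k) ^+ (mo k)) p.

(* Chat_m from c = [:: Chat_1; ...; Chat_(m-1)] *)
Definition Chat_step (S : nat -> nat -> Pinf) (m : nat) (c : seq Pinf) : Pinf :=
  - subst c (S m 0%N)
  + \sum_(1 <= i < m.+1) (3 * 2 ^ i)%N%:R * subst c (S m i) * P i.

Fixpoint Chats (S : nat -> nat -> Pinf) (m : nat) : seq Pinf :=
  match m with
  | 0 => [::]
  | m'.+1 => let c := Chats S m' in rcons c (Chat_step S m'.+1 c)
  end.

Definition Chat (S : nat -> nat -> Pinf) (m : nat) : Pinf := (Chats S m)`_m.-1.

(* Main.v *)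
Require Import Defs.
From HB Require Import structures.
From mathcomp Require Import all_boot all_order all_algebra.
From mathcomp Require Import finmap.
From mathcomp.multinomials Require Import monalg.
From mathcomp Require Import ring lra zify.

Set Implicit Arguments.
Unset Strict Implicit.
Unset Printing Implicit Defensive.
Import Order.TTheory GRing.Theory Num.Theory.
Local Open Scope ring_scope.
Local Open Scope fset.
Local Open Scope ring_scope.
Local Notation "1" := (@mone _) : monom_scope.
Local Notation "x * y" := (mmul x y) : monom_scope.
Notation cm := {cmonom nat}.
Notation eps := (@mcoeff _ rat (1%M : cm)).
Definition MP (Q : cm -> Prop) (p : Pinf) := forall m, m \in msupp p -> Q m.

Lemma MP0 Q : MP Q 0.
Proof. by move=> m; rewrite msupp0. Qed.

Lemma MPD Q p q : MP Q p -> MP Q q -> MP Q (p + q).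
Proof.
move=> hp hq m /(fsubsetP (msuppD_le p q)); rewrite in_fsetU.
by case/orP=> [/hp|/hq].
Qed.

Lemma MPN Q p : MP Q p -> MP Q (- p).
Proof. by rewrite /MP msuppN. Qed.

Lemma MPB Q p q : MP Q p -> MP Q q -> MP Q (p - q).
Proof. by move=> hp hq; apply: MPD hp (MPN hq). Qed.

Lemma MP_sum Q (I : Type) (r : seq I) (P : pred I) (F : I -> Pinf) :
  (forall i, P i -> MP Q (F i)) -> MP Q (\sum_(i <- r | P i) F i).
Proof.
move=> h; elim/big_rec: _ => [|i x Pi hx]; first exact: MP0.
exact: MPD (h _ Pi) hx.
Qed.

Lemma MPZ Q (c : rat) p : MP Q p -> MP Q (c *: p).
Proof. by move=> hp m /(fsubsetP (msuppZ_le c p)) /hp. Qed.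

Lemma MP_mul (Q1 Q2 Q3 : cm -> Prop) p q : MP Q1 p -> MP Q2 q ->
  (forall m1 m2, Q1 m1 -> Q2 m2 -> Q3 (m1 * m2)%M) -> MP Q3 (p * q).
Proof.
move=> hp hq h m /msuppM_le [m1 [m2 [h1 h2 ->]]].
exact: h (hp _ h1) (hq _ h2).
Qed.

Lemma MPC Q (c : rat) : Q 1%M -> MP Q c%:MP.
Proof. by move=> h m /(fsubsetP (msuppC_le c)); rewrite in_fset1 => /eqP->. Qed.

Lemma MPU Q (c : rat) (k : cm) : Q k -> MP Q << c *g k >>.
Proof. by move=> h m /(fsubsetP msuppU_le); rewrite in_fset1 => /eqP->. Qed.

Lemma MP_le (Q Q' : cm -> Prop) p : (forall m, Q m -> Q' m) -> MP Q p -> MP Q' p.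
Proof. by move=> h hp m /hp /h. Qed.

Lemma MPnat Q k : Q 1%M -> MP Q (k%:R : Pinf).
Proof. by move=> h; rewrite -mpolyC_nat; apply: MPC. Qed.

Lemma MP1 Q : Q 1%M -> MP Q (1 : Pinf).
Proof. by move=> h; rewrite -mpolyC1E; apply: MPC. Qed.

Lemma MPX Q p k : MP Q p -> (Q 1%M) -> (forall m1 m2, Q m1 -> Q m2 -> Q (m1 * m2)%M) ->
  MP Q (p ^+ k).
Proof.
move=> hp h1 hM; elim: k => [|k ih]; first by rewrite expr0; apply: MP1.
by rewrite exprS; apply: MP_mul hp ih hM.
Qed.

Definition wsum (w : nat -> nat) (m : cm) : nat :=
  (\sum_(i <- finsupp m) m i * w i)%N.

Lemma wsumEw w (m : cm) (d : {fset nat}) : finsupp m `<=` d ->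
  wsum w m = (\sum_(i <- d) m i * w i)%N.
Proof.
move=> le; rewrite /wsum (big_fset_incl _ le) //.
by move=> i _; rewrite -cmE_neq0 negbK => /eqP->.
Qed.

Lemma wsumM w (m1 m2 : cm) : wsum w (m1 * m2)%M = (wsum w m1 + wsum w m2)%N.
Proof.
rewrite (wsumEw w (fsubsetUl (finsupp m1) (finsupp m2))).
rewrite (wsumEw w (fsubsetUr (finsupp m1) (finsupp m2))).
by rewrite /wsum mdomD -big_split /=; apply/eq_bigr=> /= i _; rewrite cmM mulnDl.
Qed.

Lemma wsum1 w : wsum w 1%M = 0%N.
Proof. by rewrite /wsum mdom1 big_seq_fset0. Qed.

Lemma wsumU w k : wsum w (ucm k) = w k.
Proof. by rewrite /wsum mdomU big_seq_fset1 cmUU mul1n. Qed.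

Lemma wsum_le w w' (m : cm) : (forall i, w i <= w' i)%N -> (wsum w m <= wsum w' m)%N.
Proof. by move=> h; rewrite /wsum; apply: leq_sum => i _; rewrite leq_mul2l h orbT. Qed.

Definition om := wsum (fun i => i.*2.+3).
Definition sg := wsum (fun i => i.+1).

Lemma mdeg_wsum (m : cm) : mdeg m = wsum (fun _ => 1%N) m.
Proof. by rewrite mdegE /wsum; apply: eq_bigr => i _; rewrite muln1. Qed.

Lemma om_eq (m : cm) : om m = ((sg m).*2 + mdeg m)%N.
Proof.
rewrite mdeg_wsum /om /sg /wsum -mul2n big_distrr -big_split /=.
apply: eq_bigr => i _; rewrite mulnCA -mulnDr; congr (_ * _)%N.
by rewrite -!mul2n; lia.
Qed.

Lemma mdeg_ne1 (m : cm) : m != 1%M -> (0 < mdeg m)%N.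
Proof. by rewrite lt0n mdeg_eq0. Qed.

Lemma MPw_mul w d1 d2 p q : MP (fun m => wsum w m <= d1)%N p ->
  MP (fun m => wsum w m <= d2)%N q -> MP (fun m => wsum w m <= d1 + d2)%N (p * q).
Proof.
move=> hp hq; refine (MP_mul hp hq _) => m1 m2 h1 h2.
by rewrite wsumM leq_add.
Qed.
Lemma poly_eq_nat (p q : {poly rat}) :
  (forall t : nat, p.[t%:R] = q.[t%:R]) -> p = q.
Proof.
move=> h; apply/eqP; rewrite -subr_eq0; apply/negPn/negP => nz.
pose rs := [seq (i%:R : rat) | i <- iota 0 (size (p - q))].
have h1 : all (root (p - q)) rs.
  by apply/allP => x /mapP [i _ ->]; rewrite /root hornerD hornerN h subrr.
have h2 : uniq rs.
  rewrite map_inj_uniq ?iota_uniq // => i j; exact: (mulrIn (oner_neq0 _)).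
by have := max_poly_roots nz h1 h2; rewrite /rs size_map size_iota ltnn.
Qed.

Definition FP (s : nat) (F : {poly rat}) :=
  [/\ (size F <= s.+2)%N, F`_s.+1 = (s.+1%:R)^-1, F.[0] = 0 &
      forall x, F.[x + 1] = F.[x] + x ^+ s].

Lemma FP_sum s F : FP s F -> forall t : nat, F.[t%:R] = \sum_(u < t) (u%:R) ^+ s.
Proof.
case=> _ _ h0 hS; elim=> [|t ih]; first by rewrite big_ord0 h0.
by rewrite big_ord_recr /= -natr1 hS ih.
Qed.

Lemma faul e : exists Fs : nat -> {poly rat}, forall s, (s < e)%N -> FP s (Fs s).
Proof.
elim: e => [|e [Fs hFs]]; first by exists (fun _ => 0).
pose F := (e.+1%:R)^-1 *: ('X^(e.+1) - \sum_(s < e) ('C(e.+1, s)%:R *: Fs s)).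
have hz : forall s : 'I_e, forall j, (e < j)%N -> (Fs s)`_j = 0.
  move=> s j hj; have [+ _ _ _] := hFs s (ltn_ord s) => /leq_sizeP; apply.
  by apply: leq_trans hj; rewrite ltnS ltn_ord.
have hc : forall j, (e < j)%N -> F`_j = (e.+1%:R)^-1 * (j == e.+1)%:R.
  move=> j hj; rewrite coefZ coefB coefXn coef_sum big1 ?subr0 //.
  by move=> s _; rewrite coefZ hz // mulr0.
exists (fun s => if s == e then F else Fs s) => k; rewrite ltnS leq_eqVlt.
case: eqP => [-> _|_ /= hk]; last exact: hFs.
split.
- apply/leq_sizeP => j hj; rewrite hc; last by apply: leq_trans hj.
  by rewrite (_ : (j == e.+1) = false) ?mulr0 //; apply/negbTE; rewrite neq_ltn hj orbT.
- by rewrite hc // eqxx mulr1.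
- rewrite hornerZ hornerD hornerN hornerXn expr0n /= sub0r horner_sum big1 ?oppr0 ?mulr0 //.
  by move=> s _; rewrite hornerZ; have [_ _ -> _] := hFs s (ltn_ord s); rewrite mulr0.
- move=> x; rewrite !hornerZ !hornerD !hornerN !hornerXn !horner_sum.
  have -> : \sum_(i < e) ('C(e.+1, i)%:R *: Fs i).[x + 1] =
            \sum_(i < e) ('C(e.+1, i)%:R *: Fs i).[x] + \sum_(i < e) 'C(e.+1, i)%:R * x ^+ i.
    rewrite -big_split /=; apply: eq_bigr => i _.
    by rewrite !hornerZ; have [_ _ _ ->] := hFs i (ltn_ord i); rewrite mulrDr.
  rewrite exprD1n !big_ord_recr /= binn binSn mulr1n.
  have -> : \sum_(i < e) x ^+ i *+ 'C(e.+1, i) = \sum_(i < e) 'C(e.+1, i)%:R * x ^+ i.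
    by apply: eq_bigr => i _; rewrite mulr_natl.
  have he : (e.+1%:R : rat) != 0 by rewrite pnatr_eq0.
  by rewrite -mulr_natl; field; rewrite addrC natr1.
Qed.

Definition PF (d : nat) (c : rat) (f : nat -> rat) :=
  exists p : {poly rat}, [/\ (size p <= d.+1)%N, p`_d = c & forall t, f t = p.[t%:R]].

Lemma PF_ext d c f g : (forall t, f t = g t) -> PF d c f -> PF d c g.
Proof. by move=> e [p [h1 h2 h3]]; exists p; split=> // t; rewrite -e. Qed.

Lemma PF_add d c c' f g : PF d c f -> PF d c' g -> PF d (c + c') (fun t => f t + g t).
Proof.
move=> [p [h1 h2 h3]] [q [k1 k2 k3]]; exists (p + q); split.
- by apply: leq_trans (size_polyD _ _) _; rewrite geq_max h1 k1.
- by rewrite coefD h2 k2.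
- by move=> t; rewrite hornerD h3 k3.
Qed.

Lemma PF_opp d c f : PF d c f -> PF d (- c) (fun t => - f t).
Proof.
move=> [p [h1 h2 h3]]; exists (- p); split.
- by rewrite size_polyN.
- by rewrite coefN h2.
- by move=> t; rewrite hornerN h3.
Qed.

Lemma PF_const d (a : rat) : PF d.+1 0 (fun _ => a).
Proof.
exists a%:P; split.
- by apply: leq_trans (size_polyC_leq1 a) _.
- by rewrite coefC.
- by move=> t; rewrite hornerC.
Qed.

Lemma PF_weak d c f : PF d c f -> PF d.+1 0 f.
Proof.
move=> [p [h1 h2 h3]]; exists p; split=> //; first exact: leq_trans h1 _.
by move/leq_sizeP: h1; apply.
Qed.

Lemma PF_mulX1 d c f : PF d c f -> PF d.+1 c (fun t => t.+1%:R * f t).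
Proof.
move=> [p [h1 h2 h3]]; exists (p * ('X + 1)); split.
- apply/leq_sizeP => j hj; rewrite mulrDr mulr1 coefD coefMX.
  case: j hj => // j hj; move/leq_sizeP: h1 => h1.
  by rewrite !h1 ?addr0 // ltnW.
- by rewrite mulrDr mulr1 coefD coefMX /= h2; move/leq_sizeP: h1 => ->; rewrite ?addr0.
- by move=> t; rewrite hornerM hornerD hornerX hornerC natr1 h3 mulrC.
Qed.

Lemma PF_int d c f g : PF d c g -> (forall t, f t.+1 = f t + g t) ->
  PF d.+1 (c / d.+1%:R) f.
Proof.
move=> [p [h1 h2 h3]] hS.
have [Fs hFs] := faul d.+1.
exists ((f 0)%:P + \sum_(i < d.+1) p`_i *: Fs i); split.
- apply/leq_sizeP => j hj; rewrite coefD coefC.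
  rewrite (_ : (j == 0) = false) ?add0r; last by case: j hj.
  rewrite coef_sum big1 // => i _; rewrite coefZ.
  have [/leq_sizeP hsz _ _ _] := hFs i (ltn_ord i).
  by rewrite hsz ?mulr0 //; apply: leq_trans hj; rewrite !ltnS -ltnS.
- rewrite coefD coefC /= add0r coef_sum big_ord_recr /= big1.
    by rewrite add0r coefZ h2; have [_ -> _ _] := hFs d (ltnSn d).
  move=> i _; rewrite coefZ.
  have [/leq_sizeP hsz _ _ _] := hFs i (ltnW (ltn_ord i)).
  by rewrite hsz ?mulr0 // ltnS.
- elim=> [|t ih].
    rewrite hornerD hornerC horner_sum big1 ?addr0 // => i _.
    by rewrite hornerZ; have [_ _ -> _] := hFs i (ltn_ord i); rewrite mulr0.
  rewrite hS ih -natr1 !hornerD !hornerC !horner_sum -addrA; congr (_ + _).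
  rewrite h3 (horner_coef_wide _ h1) -big_split /=; apply: eq_bigr => i _.
  by rewrite !hornerZ; have [_ _ _ ->] := hFs i (ltn_ord i); rewrite mulrDr.
Qed.
Definition eta (r : nat) : rat := (-1) ^+ r / (2 ^+ r * r`!%:R).

Fixpoint cc (r : nat) : rat :=
  match r with
  | 0 => 0
  | 1 => 0
  | (r'.+1 as r1).+1 => (eta r' - cc r1) / (r'.*2.+3)%:R
  end.

Lemma ccS r : cc r.+2 = (eta r - cc r.+1) / (r.*2.+3)%:R.
Proof. by []. Qed.

Lemma cc_closed r : cc r.+2 = (-1) ^+ r / (3 * 2 ^+ r * r`!%:R).
Proof.
elim: r => [|r ih].
  by rewrite ccS /eta /= !expr0 fact0 subr0 !mulr1.
rewrite ccS ih /eta factS natrM !exprS.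
have h1 : (r`!%:R : rat) != 0 by rewrite pnatr_eq0 -lt0n fact_gt0.
have e1 : (((r.+1).*2.+3)%:R : rat) = 2 * r%:R + 5.
  by rewrite (_ : ((r.+1).*2.+3 = 2 * r + 5)%N); [rewrite natrD natrM|lia].
have e2 : ((r.+1)%:R : rat) = r%:R + 1 by rewrite natr1.
rewrite e1 e2; field.
by rewrite h1 -e2 -e1 !pnatr_eq0 expf_neq0.
Qed.

Lemma PF_zero d : PF d 0 (fun _ => 0).
Proof. by exists 0; split; rewrite ?size_poly0 ?coef0 // => t; rewrite horner0. Qed.

Lemma PF_eqc d c c' f : c = c' -> PF d c f -> PF d c' f.
Proof. by move->. Qed.

Lemma recH (H : nat -> nat -> rat) (N : nat) :
  (forall t, H 0%N t = 1) ->
  (forall r, (0 < r < N)%N -> H r 0%N = 0) ->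
  (forall r t, (0 < r < N)%N -> H r t.+1 = H r t - t.+1%:R * H r.-1 t) ->
  forall r, (r < N)%N -> PF r.*2 (eta r) (H r).
Proof.
move=> h0 hi hS; elim=> [_|r ih hr].
  exists 1; split; first by rewrite size_poly1.
    by rewrite coef1 /eta /= !expr0 fact0; field.
  by move=> t; rewrite h0 hornerC.
rewrite doubleS.
apply: (PF_eqc _ (PF_int (PF_mulX1 (PF_opp (ih (ltnW hr)))) _)).
  rewrite /eta factS exprS natrM exprS.
  have h1 : (r`!%:R : rat) != 0 by rewrite pnatr_eq0 -lt0n fact_gt0.
  have e1 : ((r.*2.+2)%:R : rat) = 2 * (r%:R + 1).
    by rewrite (_ : (r.*2.+2 = 2 * (r + 1))%N); [rewrite natrM natrD|lia].
  have e2 : ((r.+1)%:R : rat) = r%:R + 1 by rewrite natr1.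
  rewrite e1 e2; field.
  by rewrite h1 -e2 !pnatr_eq0 expf_neq0.
by move=> t; rewrite hS ?hr // mulrN.
Qed.

Lemma recX (G H : nat -> nat -> rat) (N : nat) :
  (forall t, G 0%N t = 1) -> (forall t, H 0%N t = 1) ->
  (forall r, (0 < r < N)%N -> G r 0%N = 0) ->
  (forall r, (0 < r < N)%N -> H r 0%N = 0) ->
  (forall r t, (0 < r < N)%N -> G r t = G r t.+1 + t.+1%:R * G r.-1 t.+1) ->
  (forall r t, (0 < r < N)%N -> H r t.+1 = H r t - t.+1%:R * H r.-1 t) ->
  forall r, (r.+1 < N)%N ->
    PF r.*2.+1 (cc r.+1) (fun t => G r.+1 t - H r.+1 t) /\
    exists c', PF r.*2 c' (fun t => (G r.+1 t.+1 - H r.+1 t.+1) - (G r.+1 t - H r.+1 t)).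
Proof.
move=> g0 h0 gi hi gS hS; elim=> [hN|r ih hr].
  have hD : forall t, (G 1%N t.+1 - H 1%N t.+1) - (G 1%N t - H 1%N t) = 0.
    by move=> t; rewrite (gS 1%N t) ?hN // (hS 1%N t) ?hN //= g0 h0; ring.
  split.
    apply: (PF_eqc _ (PF_int (PF_zero 0) _)); first by rewrite mul0r.
    by move=> t; rewrite addr0; apply/eqP; rewrite -subr_eq0 hD.
  by exists 0; apply: PF_ext (PF_zero 0) => t; rewrite hD.
have [IHX [c' IHD]] := ih (ltnW hr).
have hH := recH h0 hi hS (ltnW (ltnW hr)).
pose g t := - (t.+1%:R * ((G r.+1 t - H r.+1 t) + ((G r.+1 t.+1 - H r.+1 t.+1) - (G r.+1 t - H r.+1 t))))
            + t.+1%:R * (t.+1%:R * H r t).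
have hg : PF r.*2.+2 (- cc r.+1 + eta r) g.
  apply: PF_add; last by apply: PF_mulX1; apply: PF_mulX1.
  apply: PF_opp; apply: PF_mulX1.
  by rewrite -[cc r.+1]addr0; apply: PF_add IHX (PF_weak IHD).
have hrec : forall t, G r.+2 t.+1 - H r.+2 t.+1 = (G r.+2 t - H r.+2 t) + g t.
  move=> t; rewrite /g (gS r.+2 t) ?hr // (hS r.+2 t) ?hr //=.
  rewrite (hS r.+1 t) ?(ltnW hr) //=; ring.
split.
  rewrite doubleS; apply: (PF_eqc _ (PF_int hg hrec)).
  by rewrite ccS addrC.
exists (- cc r.+1 + eta r); rewrite doubleS; apply: PF_ext hg => t.
by rewrite hrec; ring.
Qed.
Definition Wt (D : nat) (Phi : {poly Pinf}) :=
  forall e, MP (fun m => om m + e <= D)%N Phi`_e.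

Definition Good (D : nat) (f : nat -> Pinf) :=
  exists Phi, Wt D Phi /\ forall t, f t = Phi.[t%:R].

Lemma Wt_le D D' Phi : (D <= D')%N -> Wt D Phi -> Wt D' Phi.
Proof. by move=> le h e; apply: MP_le (h e) => m /leq_trans; apply. Qed.

Lemma Wt0 D : Wt D 0.
Proof. by move=> e; rewrite coef0; apply: MP0. Qed.

Lemma WtD D p q : Wt D p -> Wt D q -> Wt D (p + q).
Proof. by move=> hp hq e; rewrite coefD; apply: MPD. Qed.

Lemma WtN D p : Wt D p -> Wt D (- p).
Proof. by move=> hp e; rewrite coefN; apply: MPN. Qed.

Lemma Wt_sum D (I : Type) (r : seq I) (P : pred I) (F : I -> {poly Pinf}) :
  (forall i, P i -> Wt D (F i)) -> Wt D (\sum_(i <- r | P i) F i).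
Proof.
move=> h; elim/big_rec: _ => [|i x Pi hx]; first exact: Wt0.
exact: WtD (h _ Pi) hx.
Qed.

Lemma WtM D1 D2 p q : Wt D1 p -> Wt D2 q -> Wt (D1 + D2) (p * q).
Proof.
move=> hp hq e; rewrite coefM; apply: MP_sum => j _.
refine (MP_mul (hp j) (hq (e - j)%N) _) => m1 m2 h1 h2.
rewrite /om wsumM -/om; have := ltn_ord j; lia.
Qed.

Lemma WtC D (c : Pinf) : MP (fun m => om m <= D)%N c -> Wt D c%:P.
Proof.
move=> h e; rewrite coefC; case: eqP => [->|_]; last exact: MP0.
by apply: MP_le h => m; rewrite addn0.
Qed.

Lemma WtX : Wt 1 'X.
Proof.
move=> e; rewrite coefX; case: eqP => [->|_]; last exact: MP0.
by apply: MP1; rewrite /om wsum1.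
Qed.

Lemma Wt1 D : Wt D 1.
Proof. by apply: WtC; apply: MP1; rewrite /om wsum1. Qed.

Lemma Wt_coef_high D Phi e : Wt D Phi -> (D < e)%N -> Phi`_e = 0.
Proof.
move=> h he; apply/eqP; rewrite -msupp_eq0; apply/eqP/fsetP => m.
rewrite inE; apply/negP => /h; lia.
Qed.

Lemma Wt_size D Phi : Wt D Phi -> (size Phi <= D.+1)%N.
Proof. by move=> h; apply/leq_sizeP => j hj; apply: Wt_coef_high h hj. Qed.

Lemma Good_ext D f g : (forall t, f t = g t) -> Good D f -> Good D g.
Proof. by move=> e [p [h1 h2]]; exists p; split=> // t; rewrite -e. Qed.

Lemma Good_le D D' f : (D <= D')%N -> Good D f -> Good D' f.
Proof. by move=> le [p [h1 h2]]; exists p; split=> //; apply: Wt_le h1. Qed.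

Lemma Good_add D f g : Good D f -> Good D g -> Good D (fun t => f t + g t).
Proof.
move=> [p [h1 h2]] [q [k1 k2]]; exists (p + q); split; first exact: WtD.
by move=> t; rewrite hornerD h2 k2.
Qed.

Lemma Good_opp D f : Good D f -> Good D (fun t => - f t).
Proof.
move=> [p [h1 h2]]; exists (- p); split; first exact: WtN.
by move=> t; rewrite hornerN h2.
Qed.

Lemma Good_mul D1 D2 f g : Good D1 f -> Good D2 g -> Good (D1 + D2) (fun t => f t * g t).
Proof.
move=> [p [h1 h2]] [q [k1 k2]]; exists (p * q); split; first exact: WtM.
by move=> t; rewrite hornerM h2 k2.
Qed.

Lemma Good_const D (c : Pinf) : MP (fun m => om m <= D)%N c -> Good D (fun _ => c).
Proof. by move=> h; exists c%:P; split; [apply: WtC|move=> t; rewrite hornerC]. Qed.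

Lemma Good_zero D : Good D (fun _ => 0).
Proof. by apply: Good_const; apply: MP0. Qed.

Lemma Good_sum D (I : Type) (r : seq I) (P : pred I) (F : I -> nat -> Pinf) :
  (forall i, P i -> Good D (F i)) -> Good D (fun t => \sum_(i <- r | P i) F i t).
Proof.
move=> h; elim: r => [|i r ih].
  by apply: Good_ext (Good_zero D) => t; rewrite big_nil.
case Pi: (P i).
  by apply: Good_ext (Good_add (h _ Pi) ih) => t; rewrite big_cons Pi.
by apply: Good_ext ih => t; rewrite big_cons Pi.
Qed.

Lemma Good_t1 : Good 1 (fun t => t.+1%:R).
Proof.
exists ('X + 1); split; first by apply: WtD; [apply: WtX|apply: Wt1].
by move=> t; rewrite hornerD hornerX hornerC natr1.
Qed.

Lemma Good_int D f : Good D f -> Good D.+1 (fun t => \sum_(u < t) f u).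
Proof.
move=> [p [h1 h2]].
have [Fs hFs] := faul D.+1.
exists (\sum_(i < D.+1) (p`_i)%:P * map_poly (@malgC _ rat) (Fs i)); split.
  apply: Wt_sum => i _.
  have hi : (i <= D)%N by rewrite -ltnS ltn_ord.
  apply: (@Wt_le ((D - i) + i.+1)%N); first by lia.
  apply: WtM.
    by apply: WtC; apply: MP_le (h1 i) => m; lia.
  move=> e; rewrite coef_map /=.
  have [/leq_sizeP hsz _ _ _] := hFs i (ltn_ord i).
  case: (leqP e i.+1) => he.
    by apply: MPC; rewrite /om wsum1.
  by rewrite hsz // malgC0E; apply: MP0.
move=> t; rewrite horner_sum.
have -> : \sum_(u < t) f u = \sum_(u < t) \sum_(i < D.+1) p`_i * (u%:R) ^+ i.
  by apply: eq_bigr => u _; rewrite h2 (horner_coef_wide _ (Wt_size h1)).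
rewrite exchange_big /=; apply: eq_bigr => i _.
rewrite hornerM hornerC -mulr_sumr; congr (_ * _).
rewrite -(rmorph_nat (@malgC _ rat) t) horner_map /= (FP_sum (hFs i (ltn_ord i))).
by rewrite rmorph_sum; apply: eq_bigr => u _; rewrite rmorphXn rmorph_nat.
Qed.
Definition eqN {R : nzRingType} (N : nat) (A B : {poly R}) := forall k, (k < N)%N -> A`_k = B`_k.

Lemma eqN_refl {R : nzRingType} N (A : {poly R}) : eqN N A A.
Proof. by []. Qed.

Lemma eqN_sym {R : nzRingType} N (A B : {poly R}) : eqN N A B -> eqN N B A.
Proof. by move=> h k hk; rewrite h. Qed.

Lemma eqN_trans {R : nzRingType} N (A B C : {poly R}) : eqN N A B -> eqN N B C -> eqN N A C.
Proof. by move=> h1 h2 k hk; rewrite h1 ?h2. Qed.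

Lemma eqN_mul {R : nzRingType} N (A A' B B' : {poly R}) :
  eqN N A A' -> eqN N B B' -> eqN N (A * B) (A' * B').
Proof.
move=> h1 h2 k hk; rewrite !coefM; apply: eq_bigr => j _.
rewrite h1 ?h2 //; first by apply: leq_ltn_trans hk; apply: leq_subr.
by apply: leq_ltn_trans hk; rewrite -ltnS.
Qed.

Lemma eqN_add {R : nzRingType} N (A A' B B' : {poly R}) :
  eqN N A A' -> eqN N B B' -> eqN N (A + B) (A' + B').
Proof. by move=> h1 h2 k hk; rewrite !coefD h1 ?h2. Qed.

Lemma eqN_opp {R : nzRingType} N (A A' : {poly R}) : eqN N A A' -> eqN N (- A) (- A').
Proof. by move=> h1 k hk; rewrite !coefN h1. Qed.

Lemma eqN_trunc N p : eqN N (trunc N p) p.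
Proof. by move=> k hk; rewrite /trunc coef_poly hk. Qed.

Lemma eqN_map N (A B : {poly Pinf}) : eqN N A B -> eqN N (map_poly eps A) (map_poly eps B).
Proof. by move=> h k hk; rewrite !coef_map /= h. Qed.

Lemma map_trunc N p : eqN N (map_poly eps (trunc N p)) (map_poly eps p).
Proof. by apply: eqN_map; apply: eqN_trunc. Qed.

Definition Uc (N : nat) (c : rat) (A : nat -> {poly Pinf}) :=
  (forall t, (A t)`_0 = c%:MP) /\
  (forall s, (0 < s < N)%N -> Good s.*2.-1 (fun t => (A t)`_s)).

Definition SerG (N : nat) (A : nat -> {poly Pinf}) :=
  forall r, (r < N)%N -> Good r.*2 (fun t => (A t)`_r).

Lemma om1 : om 1%M = 0%N.
Proof. by rewrite /om wsum1. Qed.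

Lemma Good_C0 D (c : rat) : Good D (fun _ => c%:MP).
Proof. by apply: Good_const; apply: MPC; rewrite om1. Qed.

Lemma Uc_coef N c A j : Uc N c A -> (j < N)%N -> Good j.*2.-1 (fun t => (A t)`_j).
Proof.
case=> h0 hs hj; case: j hj => [|j] hj.
  by apply: Good_ext (Good_C0 _ c) => t; rewrite h0.
by apply: hs; rewrite hj.
Qed.

Lemma Uc_eqc N c c' A : c = c' -> Uc N c A -> Uc N c' A.
Proof. by move->. Qed.

Lemma Uc_ext N c A B : (forall t, A t = B t) -> Uc N c A -> Uc N c B.
Proof.
move=> e [h0 hs]; split=> [t|s hs']; first by rewrite -e.
by apply: Good_ext (hs s hs') => t; rewrite e.
Qed.

Lemma Uc_mul N c d A B : Uc N c A -> Uc N d B -> Uc N (c * d) (fun t => A t * B t).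
Proof.
move=> hA hB; split.
  by move=> t; rewrite coefM big_ord1 subnn hA.1 hB.1 rmorphM.
move=> s /andP [s0 sN].
apply: Good_ext; first by move=> t; rewrite coefM.
apply: Good_sum => j _.
have hj : (j < N)%N by apply: leq_ltn_trans sN; rewrite -ltnS.
have hsj : (s - j < N)%N by apply: leq_ltn_trans sN; apply: leq_subr.
apply: Good_le (Good_mul (Uc_coef hA hj) (Uc_coef hB hsj)).
have := ltn_ord j; lia.
Qed.

Lemma Uc_add N c d A B : Uc N c A -> Uc N d B -> Uc N (c + d) (fun t => A t + B t).
Proof.
move=> hA hB; split=> [t|s hs]; first by rewrite coefD hA.1 hB.1 rmorphD.
apply: Good_ext (Good_add (hA.2 s hs) (hB.2 s hs)) => t.
by rewrite coefD.
Qed.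

Lemma Uc_opp N c A : Uc N c A -> Uc N (- c) (fun t => - A t).
Proof.
move=> hA; split=> [t|s hs]; first by rewrite coefN hA.1 rmorphN.
by apply: Good_ext (Good_opp (hA.2 s hs)) => t; rewrite coefN.
Qed.

Lemma Uc_const N (c : rat) (P : {poly Pinf}) : P`_0 = c%:MP ->
  (forall s, (0 < s < N)%N -> MP (fun m => om m <= s.*2.-1)%N P`_s) -> Uc N c (fun _ => P).
Proof. by move=> h0 hs; split=> // s hs'; apply: Good_const; apply: hs. Qed.

Lemma Uc_one N : Uc N 1 (fun _ => 1).
Proof.
apply: Uc_const; first by rewrite coef1 mpolyC1E.
by move=> s /andP [s0 _]; rewrite coef1; case: s s0 => // s _; apply: MP0.
Qed.

Lemma Uc_zero N : Uc N 0 (fun _ => 0).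
Proof.
apply: Uc_const; first by rewrite coef0 malgC0E.
by move=> s _; rewrite coef0; apply: MP0.
Qed.

Lemma Uc_sum N (I : Type) (r : seq I) (c : I -> rat) (F : I -> nat -> {poly Pinf}) :
  (forall i, Uc N (c i) (F i)) -> Uc N (\sum_(i <- r) c i) (fun t => \sum_(i <- r) F i t).
Proof.
move=> h; elim: r => [|i r ih].
  by apply: Uc_ext (Uc_eqc _ (Uc_zero N)) => [t|]; rewrite big_nil.
apply: Uc_ext (Uc_eqc _ (Uc_add (h i) ih)) => [t|]; by rewrite big_cons.
Qed.

Lemma Uc_exp N c A k : Uc N c A -> Uc N (c ^+ k) (fun t => A t ^+ k).
Proof.
move=> hA; elim: k => [|k ih].
  by apply: Uc_ext (Uc_eqc _ (Uc_one N)) => [t|]; rewrite expr0.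
by apply: Uc_ext (Uc_eqc _ (Uc_mul hA ih)) => [t|]; rewrite exprS.
Qed.

Lemma Uc_trunc N c A : (0 < N)%N -> Uc N c A -> Uc N c (fun t => trunc N (A t)).
Proof.
move=> N0 hA; split=> [t|s hs]; first by rewrite (@eqN_trunc N (A t) 0%N N0) hA.1.
apply: Good_ext (hA.2 s hs) => t; rewrite eqN_trunc //.
by case/andP: hs.
Qed.

Lemma Uc_sinv N q : (0 < N)%N -> Uc N 0 (fun t => - q t) -> Uc N 1 (fun t => sinv N (q t)).
Proof.
move=> N0 hq; apply: Uc_trunc => //.
have h := Uc_sum (index_enum 'I_N) (fun k => Uc_exp (val k) hq).
have e : \sum_(i <- index_enum 'I_N) (0 : rat) ^+ val i = 1.
  rewrite -(big_mkord xpredT (fun k => (0:rat) ^+ k)).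
  case: N {h hq} N0 => // N _; rewrite big_nat_recl // expr0 big1 ?addr0 //.
  by move=> i _; rewrite expr0n.
by apply: Uc_ext (Uc_eqc e h) => t.
Qed.

Lemma Good_at0 D f : Good D f -> MP (fun m => om m <= D)%N (f 0%N).
Proof.
move=> [p [h1 h2]]; rewrite h2 horner_coef0.
by apply: MP_le (h1 0%N) => m; rewrite addn0.
Qed.

Lemma SerG_B N A B : SerG N A -> SerG N B -> SerG N (fun t => A t - B t).
Proof.
move=> hA hB r hr; apply: Good_ext (Good_add (hA r hr) (Good_opp (hB r hr))) => t.
by rewrite coefB.
Qed.

Lemma SerG_mulU N c A B : SerG N A -> Uc N c B -> SerG N (fun t => A t * B t).
Proof.
move=> hA hB r hr; apply: Good_ext; first by move=> t; rewrite coefM.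
apply: Good_sum => j _.
have hj : (j < N)%N by apply: leq_ltn_trans hr; rewrite -ltnS.
have hrj : (r - j < N)%N by apply: leq_ltn_trans hr; apply: leq_subr.
apply: Good_le (Good_mul (hA _ hj) (Uc_coef hB hrj)).
have := ltn_ord j; lia.
Qed.

Lemma SerG_int N A B : Uc N 1 B ->
  (forall t, eqN N (A t.+1) (A t * B t)) ->
  (forall r, (r < N)%N -> MP (fun m => om m <= r.*2)%N (A 0%N)`_r) -> SerG N A.
Proof.
move=> hB hS h0; elim/ltn_ind => r ih hr.
pose D t := \sum_(j < r) (A t)`_j * (B t)`_(r - j).
have hrec : forall t, (A t.+1)`_r = (A t)`_r + D t.
  move=> t; rewrite hS // coefM big_ord_recr /= subnn hB.1 mpolyC1E mulr1 addrC.
  by [].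
have hD : Good r.*2.-1 D.
  apply: Good_sum => j _.
  have hj : (j < N)%N by apply: ltn_trans hr.
  have hrj : (r - j < N)%N by apply: leq_ltn_trans hr; apply: leq_subr.
  apply: Good_le (Good_mul (ih j (ltn_ord j) hj) (Uc_coef hB hrj)).
  have := ltn_ord j; lia.
have hA : forall t, (A t)`_r = (A 0%N)`_r + \sum_(u < t) D u.
  elim=> [|t iht]; first by rewrite big_ord0 addr0.
  by rewrite hrec iht big_ord_recr /= addrA.
have [r0|rpos] := posnP r.
  apply: (Good_ext _ (Good_const (h0 r hr))) => t.
  rewrite (hA t) big1 ?addr0 // => u _; rewrite /D big1 // => j _.
  by case: j => j hj; exfalso; move: hj; rewrite r0.
have hI : Good r.*2 (fun t => \sum_(u < t) D u).
  by apply: (Good_le _ (Good_int hD)); lia.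
by apply: (Good_ext _ (Good_add (Good_const (h0 _ hr)) hI)) => t; rewrite (hA t).
Qed.
Definition fac N (i : nat) : {poly Pinf} :=
  (1 + aser N * 'X^2) * sinv N ((i%:R : Pinf) *: 'X).
Definition hkf N (k : nat) : {poly Pinf} :=
  (1 - ((k.+1)%:R : Pinf) *: 'X) * sinv N (aser N * 'X^2).

Lemma om_ucm k : om (ucm k) = k.*2.+3.
Proof. by rewrite /om wsumU. Qed.

Lemma Uc_aX2 N : Uc N 0 (fun _ => aser N * 'X^2).
Proof.
apply: Uc_const; first by rewrite coefMXn /= malgC0E.
move=> s /andP [s0 sN]; rewrite coefMXn; case: ltnP => hs; first exact: MP0.
rewrite /aser coef_poly; case: ltnP => _; last exact: MP0.
by apply: MPU; rewrite om_ucm; lia.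
Qed.

Lemma Uc_1aX2 N : Uc N 1 (fun _ => 1 + aser N * 'X^2).
Proof. by apply: Uc_eqc (Uc_add (Uc_one N) (Uc_aX2 N)); rewrite addr0. Qed.

Lemma Good_tn o : Good 1 (fun t => ((t + o)%:R : Pinf)).
Proof.
exists ('X + (o%:R : Pinf)%:P); split.
  by apply: WtD; [apply: WtX | apply: WtC; apply: MPnat; rewrite om1].
by move=> t; rewrite hornerD hornerX hornerC natrD.
Qed.

Lemma Uc_tX N o : Uc N 0 (fun t => ((t + o)%:R : Pinf) *: 'X).
Proof.
split=> [t|s /andP [s0 sN]]; first by rewrite coefZ coefX mulr0 malgC0E.
apply: Good_ext; first by move=> t; rewrite coefZ coefX.
case: eqP => [->|_].
  by apply: Good_ext (Good_tn o) => t; rewrite mulr1.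
by apply: Good_ext (Good_zero _) => t; rewrite mulr0.
Qed.

Lemma Uc_fac N o : (0 < N)%N -> Uc N 1 (fun t => fac N (t + o)).
Proof.
move=> N0; apply: Uc_eqc (Uc_mul (Uc_1aX2 N) (Uc_sinv N0 (Uc_eqc _ (Uc_opp (Uc_tX N o))))).
  by rewrite mulr1.
by rewrite oppr0.
Qed.

Lemma Uc_hk N : (0 < N)%N -> Uc N 1 (fun t => hkf N t).
Proof.
move=> N0.
have hs := Uc_sinv N0 (Uc_eqc (oppr0 _) (Uc_opp (Uc_aX2 N))).
have h1 : Uc N 1 (fun t => 1 - ((t.+1)%:R : Pinf) *: 'X).
  apply: Uc_ext (Uc_eqc _ (Uc_add (Uc_one N) (Uc_opp (Uc_tX N 1%N)))).
    by move=> t; rewrite addn1.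
  by rewrite oppr0 addr0.
by apply: Uc_eqc (Uc_mul h1 hs); rewrite mulr1.
Qed.

Lemma Gser_rec N t : eqN N (Gser N t.+2) (Gser N t.+1 * fac N t.+1).
Proof.
move=> k hk; rewrite /Gser (eqN_trunc _ hk) big_ord_recr /=.
rewrite !coefM; apply: eq_bigr => j _; rewrite eqN_trunc //.
by apply: leq_ltn_trans hk; rewrite -ltnS.
Qed.

Lemma Hser_rec N t : eqN N (Hser N t.+2) (Hser N t.+1 * hkf N t).
Proof.
move=> k hk; rewrite /Hser /= (eqN_trunc _ hk) big_ord_recr /=.
rewrite !coefM; apply: eq_bigr => j _; rewrite eqN_trunc //.
by apply: leq_ltn_trans hk; rewrite -ltnS.
Qed.

Lemma SerG_G N : (0 < N)%N -> SerG N (fun t => Gser N t.+1).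
Proof.
move=> N0; apply: (SerG_int (B := fun t => fac N t.+1)).
- by apply: Uc_ext (Uc_fac 1%N N0) => t; rewrite addn1.
- exact: Gser_rec.
move=> r hr; rewrite /Gser big_ord1 /= eqN_trunc //.
have := Good_at0 (Uc_coef (Uc_fac 0%N N0) hr); rewrite /=.
by apply: MP_le => m; lia.
Qed.

Lemma SerG_H N : (0 < N)%N -> SerG N (fun t => Hser N t.+1).
Proof.
move=> N0; apply: (SerG_int (B := fun t => hkf N t)).
- exact: Uc_hk.
- exact: Hser_rec.
move=> r hr; rewrite /Hser big_ord0 eqN_trunc // coef1.
by case: eqP => _; [apply: MP1; rewrite om1 | apply: MP0].
Qed.

Lemma Good_coefGH n : Good (n.+1).*2 (fun t => coefGH n t.+1).
Proof.
have N0 : (0 < n.+2)%N by [].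
have := SerG_mulU (SerG_B (SerG_G N0) (SerG_H N0)) (Uc_1aX2 n.+2).
by move/(_ n.+1 (ltnSn _)).
Qed.
Lemma eqN_mull {R : nzRingType} N (A A' B : {poly R}) k :
  eqN N A A' -> (k < N)%N -> (A * B)`_k = (A' * B)`_k.
Proof.
move=> h hk; rewrite !coefM; apply: eq_bigr => j _; rewrite h //.
by apply: leq_ltn_trans hk; rewrite -ltnS.
Qed.

Lemma eqN_mulr {R : nzRingType} N (A B B' : {poly R}) k :
  eqN N B B' -> (k < N)%N -> (A * B)`_k = (A * B')`_k.
Proof.
move=> h hk; rewrite !coefM; apply: eq_bigr => j _; rewrite h //.
by apply: leq_ltn_trans hk; apply: leq_subr.
Qed.

Lemma eps_mvar k : eps (mvar k) = 0.
Proof. by rewrite /mvar mcoeffU cm1_eq1. Qed.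

Lemma map_aser N : map_poly eps (aser N) = 0.
Proof.
apply/polyP => i; rewrite coef_map /= coef_poly coef0.
by case: ifP => _; [exact: eps_mvar | exact: mcoeff0].
Qed.

Lemma map_1aX2 N : map_poly eps (1 + aser N * 'X^2) = 1.
Proof. by rewrite rmorphD rmorphM /= map_aser mul0r addr0 rmorph1. Qed.

Lemma map_tX j : map_poly eps ((j%:R : Pinf) *: 'X) = (j%:R : rat) *: 'X.
Proof. by rewrite map_polyZ /= map_polyX rmorph_nat. Qed.

Lemma map_sinv N q : eqN N (map_poly eps (sinv N q)) (\sum_(k < N) (- map_poly eps q) ^+ k).
Proof.
move=> k hk; rewrite coef_map /= /sinv eqN_trunc // -coef_map rmorph_sum /=.
by rewrite (eq_bigr (fun i : 'I_N => (- map_poly eps q) ^+ i)) // => i _; rewrite rmorphXn rmorphN.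
Qed.

Lemma geo_sum {R : comNzRingType} N (a : {poly R}) :
  (\sum_(k < N) a ^+ k) * (1 - a) = 1 - a ^+ N.
Proof.
elim: N => [|N ih]; first by rewrite big_ord0 mul0r expr0 subrr.
by rewrite big_ord_recr mulrDl ih exprSr; ring.
Qed.

Lemma eqN_geo N (y : rat) :
  eqN N ((\sum_(k < N) (- (y *: 'X)) ^+ k) * (1 + y *: 'X)) 1.
Proof.
move=> k hk; rewrite -{2}(opprK (y *: 'X)) geo_sum coefB.
rewrite -scaleNr exprZn coefZ coefXn.
by rewrite (_ : (k == N) = false) ?mulr0 ?subr0 //; apply/negbTE; rewrite ltn_eqF.
Qed.

Lemma sum_0pow {R : nzRingType} N : (0 < N)%N -> \sum_(k < N) (0 : R) ^+ k = 1.
Proof.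
case: N => // N _; rewrite big_ord_recl expr0 big1 ?addr0 // => i _.
by rewrite expr0n.
Qed.

Definition Gh N t := map_poly eps (Gser N t.+1).
Definition Hh N t := map_poly eps (Hser N t.+1).

Lemma Gh_rec N t : eqN N (Gh N t.+1 * (1 + ((t.+1)%:R : rat) *: 'X)) (Gh N t).
Proof.
move=> k hk; rewrite /Gh (eqN_mull _ (eqN_map (@Gser_rec N t)) hk) rmorphM /= -mulrA.
have hf : eqN N (map_poly eps (fac N t.+1) * (1 + ((t.+1)%:R : rat) *: 'X)) 1.
  move=> i hi; rewrite /fac rmorphM /= map_1aX2 mul1r (eqN_mull _ (map_sinv _) hi).
  by rewrite map_tX eqN_geo.
by rewrite (eqN_mulr _ hf hk) mulr1.
Qed.

Lemma Hh_rec N t : (0 < N)%N ->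
  eqN N (Hh N t.+1) (Hh N t * (1 - ((t.+1)%:R : rat) *: 'X)).
Proof.
move=> N0 k hk; rewrite /Hh (eqN_map (@Hser_rec N t) hk) rmorphM /=.
apply: eqN_mulr hk => i hi; rewrite /hkf rmorphM /= (eqN_mulr _ (map_sinv _) hi).
rewrite rmorphM /= map_aser mul0r oppr0 sum_0pow // mulr1 rmorphB rmorph1 /=.
by rewrite map_tX.
Qed.

Lemma Gh0 N : (0 < N)%N -> eqN N (Gh N 0%N) 1.
Proof.
move=> N0 k hk; rewrite /Gh map_trunc // big_ord1 /fac rmorphM /= map_1aX2 mul1r.
by rewrite map_sinv // scale0r rmorph0 oppr0 sum_0pow.
Qed.

Lemma Hh0 N : (0 < N)%N -> eqN N (Hh N 0%N) 1.
Proof. by move=> N0 k hk; rewrite /Hh map_trunc // /= big_ord0 rmorph1. Qed.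

Lemma coef_mul1X (p : {poly rat}) c r :
  (p * (1 + c *: 'X))`_r = p`_r + (if r is r'.+1 then c * p`_r' else 0).
Proof. by rewrite mulrDr mulr1 coefD -scalerAr coefZ coefMX; case: r => [|r]; rewrite ?mulr0. Qed.

Lemma coef_mul1Xm (p : {poly rat}) c r :
  (p * (1 - c *: 'X))`_r = p`_r - (if r is r'.+1 then c * p`_r' else 0).
Proof. by rewrite mulrBr mulr1 coefB -scalerAr coefZ coefMX; case: r => [|r]; rewrite ?mulr0. Qed.

Lemma eps_coefGH n : PF n.*2.+1 (cc n.+1) (fun t => eps (coefGH n t.+1)).
Proof.
have N0 : (0 < n.+2)%N by [].
pose G r t := (Gh n.+2 t)`_r.
pose H r t := (Hh n.+2 t)`_r.
have g0 : forall t, G 0%N t = 1.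
  elim=> [|t ih]; first by rewrite /G (Gh0 N0) // coef1.
  by rewrite -ih /G -(@Gh_rec n.+2 t) // coef_mul1X addr0.
have h0 : forall t, H 0%N t = 1.
  elim=> [|t ih]; first by rewrite /H (Hh0 N0) // coef1.
  by rewrite -ih /H (Hh_rec t N0) // coef_mul1Xm subr0.
have gi : forall r, (0 < r < n.+2)%N -> G r 0%N = 0.
  by move=> [|r] // /andP [_ hr]; rewrite /G (Gh0 N0) // coef1.
have hi : forall r, (0 < r < n.+2)%N -> H r 0%N = 0.
  by move=> [|r] // /andP [_ hr]; rewrite /H (Hh0 N0) // coef1.
have gS : forall r t, (0 < r < n.+2)%N -> G r t = G r t.+1 + t.+1%:R * G r.-1 t.+1.
  by move=> [|r] t // /andP [_ hr]; rewrite /G -(@Gh_rec n.+2 t) // coef_mul1X.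
have hS : forall r t, (0 < r < n.+2)%N -> H r t.+1 = H r t - t.+1%:R * H r.-1 t.
  by move=> [|r] t // /andP [_ hr]; rewrite /H (Hh_rec t N0) // coef_mul1Xm.
have [hX _] := recX g0 h0 gi hi gS hS (ltnSn n.+1).
apply: PF_ext hX => t; rewrite /G /H /coefGH /= -[in RHS]coef_map rmorphM rmorphB /=.
by rewrite map_1aX2 mulr1 coefB.
Qed.
Definition Qp : {poly rat} := ('X + 1) * 'X.
Definition PsiP (s : nat -> rat) (n : nat) : {poly rat} :=
  ((2 : rat) *: 'X + 1) * \sum_(i < n.+1) s i *: Qp ^+ i.

Lemma Qp_pow_coef i j : (i.*2 < j)%N -> (Qp ^+ i)`_j = 0.
Proof.
elim: i j => [|i ih] j hj; first by rewrite expr0 coef1; case: j hj.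
rewrite exprSr {2}/Qp mulrA coefMX mulrDr mulr1 coefD coefMX.
case: j hj => [|j] //= hj; rewrite doubleS in hj.
case: j hj => [|j] //= hj; rewrite !ih ?addr0 //; lia.
Qed.

Lemma Qp_pow_lead i : (Qp ^+ i)`_(i.*2) = 1.
Proof.
elim: i => [|i ih]; first by rewrite expr0 coef1.
rewrite exprSr {2}/Qp mulrA coefMX mulrDr mulr1 coefD coefMX doubleS /=.
by rewrite ih Qp_pow_coef ?addr0.
Qed.

Lemma PsiP_coef s n M : (M <= n)%N -> (forall i, (M < i <= n)%N -> s i = 0) ->
  (PsiP s n)`_(M.*2.+1) = 2 * s M.
Proof.
move=> hM hz.
have hT : \sum_(i < n.+1) s i *: Qp ^+ i = \sum_(i < M.+1) s i *: Qp ^+ i.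
  rewrite -!(big_mkord xpredT (fun i => s i *: Qp ^+ i)).
  rewrite (big_cat_nat (n := M.+1)) //= [X in _ + X]big1_seq ?addr0 //.
  move=> i /andP [_]; rewrite mem_index_iota => /andP [h1 h2].
  by rewrite hz ?scale0r // h1 -ltnS h2.
have c1 : forall j, (M.*2 < j)%N -> (\sum_(i < M.+1) s i *: Qp ^+ i)`_j = 0.
  move=> j hj; rewrite coef_sum big1 // => i _; rewrite coefZ Qp_pow_coef ?mulr0 //.
  by apply: leq_ltn_trans hj; rewrite leq_double -ltnS.
have c2 : (\sum_(i < M.+1) s i *: Qp ^+ i)`_(M.*2) = s M.
  rewrite coef_sum big_ord_recr /= coefZ Qp_pow_lead mulr1 big1 ?add0r // => i _.
  by rewrite coefZ Qp_pow_coef ?mulr0 // ltn_double.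
rewrite /PsiP hT mulrDl mul1r coefD -scalerAl coefZ coefXM /= c2 c1 ?addr0 //.
Qed.

Lemma PsiP_eval s n (x : rat) :
  (PsiP s n).[x] = (2 * x + 1) * \sum_(i < n.+1) s i * ((x + 1) * x) ^+ i.
Proof.
rewrite /PsiP hornerM hornerD hornerZ hornerX hornerC horner_sum.
congr (_ * _); apply: eq_bigr => i _.
by rewrite hornerZ horner_exp /Qp hornerM hornerD hornerX hornerC.
Qed.
Definition sco (S : nat -> nat -> Pinf) n (a : cm) (i : nat) : rat :=
  if i == 0%N then (mvar n.-1 + S n 0%N)@_a else (S n i)@_a.

Lemma mcoeff_natM (k : nat) (p : Pinf) a : ((k%:R : Pinf) * p)@_a = k%:R * p@_a.
Proof. by rewrite mulr_natl mcoeffMn mulr_natl. Qed.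

Lemma mcoeff_Mnat (p : Pinf) k a : (p * (k%:R : Pinf))@_a = p@_a * k%:R.
Proof. by rewrite mulr_natr mcoeffMn mulr_natr. Qed.

Lemma spec_coef S n a t : (1 <= n)%N -> S_spec S n ->
  (coefGH n t.+1)@_a = (PsiP (sco S n a) n).[t%:R].
Proof.
move=> n1 [_ hS]; rewrite hS // PsiP_eval.
rewrite (_ : (2 * t.+1 - 1)%N = (2 * t + 1)%N); last by lia.
rewrite (_ : (t.+1 * (t.+1 - 1))%N = (t.+1 * t)%N); last by lia.
rewrite mcoeff_natM natrD natrM; congr (_ * _).
rewrite big_ord_recl /sco /= expr0 mulr1 !mcoeffD; congr (_ + _).
rewrite raddf_sum big_add1 /= big_mkord; apply: eq_bigr => i _ /=.
by rewrite -natrX mcoeff_Mnat natrX natrM -natr1.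
Qed.

Lemma Good_coef D f a : Good D f -> exists phi : {poly rat},
  (forall e, phi`_e != 0 -> (om a + e <= D)%N) /\ forall t, (f t)@_a = phi.[t%:R].
Proof.
move=> [P [hW hP]]; exists (map_poly (mcoeff a) P); split.
  move=> e; rewrite coef_map /= mcoeff_neq0; exact: hW.
have hs : (size (map_poly (mcoeff a) P) <= D.+1)%N.
  apply/leq_sizeP => j hj; rewrite coef_map /= (Wt_coef_high hW hj); exact: mcoeff0.
move=> t; rewrite hP (horner_coef_wide _ (Wt_size hW)) (horner_coef_wide _ hs) raddf_sum.
by apply: eq_bigr => i _; rewrite coef_map /= -natrX mcoeff_Mnat natrX.
Qed.

Lemma exists_max (s : nat -> rat) n I : s I != 0 -> (I <= n)%N ->
  exists M, [/\ (I <= M <= n)%N, s M != 0 & forall i, (M < i <= n)%N -> s i = 0].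
Proof.
move=> hI; elim: n => [|n ih] hn.
  exists 0%N; move: hn; rewrite leqn0 => /eqP hI0; subst I; split=> //.
  by move=> i /andP [h1 h2]; move: h1; rewrite ltnNge h2.
have [h0|h0] := eqVneq (s n.+1) 0; last first.
  by exists n.+1; split=> // [|i /andP [h1 h2]]; [rewrite hn leqnn | move: h1; rewrite ltnNge h2].
have hIn : (I <= n)%N.
  move: hn; rewrite leq_eqVlt => /orP [/eqP hIe|//]; by move: hI; rewrite hIe h0 eqxx.
have [M [/andP [h1 h2] h3 h4]] := ih hIn; exists M; split=> //; first by rewrite h1 ltnW.
move=> i /andP [hi1 hi2]; move: hi2; rewrite leq_eqVlt => /orP [/eqP ->//|hi2].
by apply: h4; rewrite hi1 -ltnS.
Qed.

Lemma om_ge3 (a : cm) : a != 1%M -> (3 <= om a)%N.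
Proof.
move=> ha; have := mdeg_ne1 ha; rewrite om_eq.
have : (mdeg a <= sg a)%N by rewrite mdeg_wsum /sg; apply: wsum_le.
lia.
Qed.

Lemma mvar_coef_ne k (a : cm) : a != ucm k -> (mvar k)@_a = 0.
Proof. by move=> h; rewrite /mvar mcoeffU eq_sym (negbTE h). Qed.

Lemma S_bound S n i a : (1 <= n)%N -> S_spec S n -> (i <= n)%N ->
  a \in msupp (S n i) -> a != 1%M -> (om a + i.*2 <= n.*2.+1)%N.
Proof.
move=> n1 hspec hi ha a1.
have [phi [hphi hev]] := Good_coef a (Good_coefGH n).
have e : phi = PsiP (sco S n a) n.
  by apply: poly_eq_nat => t; rewrite -hev; apply: spec_coef.
have hs : sco S n a i != 0.
  rewrite /sco; have [i0|i0] := eqVneq i 0%N; last by rewrite mcoeff_neq0.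
  rewrite mcoeffD mvar_coef_ne ?add0r; first by rewrite mcoeff_neq0 -i0.
  apply/eqP => hau; have [hv _] := hspec; move: (hv i hi a ha (n.-1)).
  by rewrite hau mdomU in_fset1 eqxx ltnn => /(_ isT).
have [M [/andP [h1 h2] h3 h4]] := exists_max hs hi.
have := hphi M.*2.+1; rewrite e PsiP_coef // mulf_neq0 // => /(_ isT).
move: h1; rewrite -leq_double; lia.
Qed.

Lemma Sn_top S n : (1 <= n)%N -> S_spec S n -> (S n n)@_(1%M) = cc n.+1 / 2.
Proof.
move=> n1 hspec.
have [p [hsz hc hev]] := eps_coefGH n.
have e : p = PsiP (sco S n 1%M) n.
  by apply: poly_eq_nat => t; rewrite -hev; apply: spec_coef.
have hz : forall i, (n < i <= n)%N -> sco S n 1%M i = 0.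
  by move=> i; rewrite ltnNge => /andP [/negbTE ->].
have := PsiP_coef (leqnn n) hz.
rewrite -e hc /sco; have [n0|n0] := eqVneq n 0%N; first by move: n1; rewrite n0.
by move=> ->; field.
Qed.
Definition VB (k : nat) (m : cm) := forall i, i \in finsupp m -> (i < k)%N.

Lemma VBE k p : vars_below k p <-> MP (VB k) p.
Proof. by []. Qed.

Lemma VB_mul k (m1 m2 : cm) : VB k m1 -> VB k m2 -> VB k (m1 * m2)%M.
Proof. by move=> h1 h2 i; rewrite mdomD in_fsetU => /orP [/h1|/h2]. Qed.

Lemma VB1 k : VB k 1%M.
Proof. by move=> i; rewrite mdom1 in_fset0. Qed.

Lemma VBU k j : (j < k)%N -> VB k (ucm j).
Proof. by move=> h i; rewrite mdomU in_fset1 => /eqP ->. Qed.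

Lemma VB_le k k' m : (k <= k')%N -> VB k m -> VB k' m.
Proof. by move=> le h i /h /leq_trans; apply. Qed.

Lemma MPVB_mul k p q : MP (VB k) p -> MP (VB k) q -> MP (VB k) (p * q).
Proof. by move=> hp hq; refine (MP_mul hp hq _) => m1 m2; apply: VB_mul. Qed.

Lemma MPVB_C k (c : rat) : MP (VB k) c%:MP.
Proof. by apply: MPC; apply: VB1. Qed.

Lemma MPVB_nat k n : MP (VB k) (n%:R : Pinf).
Proof. by apply: MPnat; apply: VB1. Qed.

Lemma MPVB_le k k' p : (k <= k')%N -> MP (VB k) p -> MP (VB k') p.
Proof. by move=> le; apply: MP_le => m; apply: VB_le. Qed.

Lemma MPVB_mvar k j : (j < k)%N -> MP (VB k) (mvar j).
Proof. by move=> h; apply: MPU; apply: VBU. Qed.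

Definition DG (d : nat) (m : cm) := (mdeg m <= d)%N.

Lemma MPDG_mul d1 d2 p q : MP (DG d1) p -> MP (DG d2) q -> MP (DG (d1 + d2)) (p * q).
Proof. by move=> hp hq; refine (MP_mul hp hq _) => m1 m2; rewrite /DG mdegM; apply: leq_add. Qed.

Lemma MPDG_le d d' p : (d <= d')%N -> MP (DG d) p -> MP (DG d') p.
Proof. by move=> le; apply: MP_le => m /leq_trans; apply. Qed.

Lemma MPDG_C d (c : rat) : MP (DG d) c%:MP.
Proof. by apply: MPC; rewrite /DG mdeg1. Qed.

Lemma MPDG_nat d n : MP (DG d) (n%:R : Pinf).
Proof. by apply: MPnat; rewrite /DG mdeg1. Qed.

Lemma MPDG_mvar d j : (1 <= d)%N -> MP (DG d) (mvar j).
Proof. by move=> h; apply: MPU; rewrite /DG mdegU. Qed.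

Lemma D_mmap p : D p = mmap (@malgC _ rat) Dmon p.
Proof. by rewrite /D mmapE; apply: eq_bigr => m _; rewrite mul_malgC. Qed.

Lemma DD p q : D (p + q) = D p + D q.
Proof. by rewrite !D_mmap mmapD. Qed.

Lemma DB p q : D (p - q) = D p - D q.
Proof. by rewrite !D_mmap mmapB. Qed.

Lemma D_mvar k : D (mvar k) = mvar k.+1.
Proof.
rewrite D_mmap /mvar mmapU /= mpolyC1E mul1r /Dmon mdomU big_seq_fset1 cmUU.
have -> : divcm (ucm k) (ucm k) = 1%M.
  by apply/eqP/cmP => i; rewrite divcmE subnn cm1.
by rewrite mul_malgC ?mulr1n scale1r.
Qed.

Lemma D_MP (Q Q' : cm -> Prop) p :
  (forall (m : cm) (k : nat), k \in finsupp m -> Q m -> Q' (divcm m (ucm k) * ucm k.+1)%M) ->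
  MP Q p -> MP Q' (D p).
Proof.
move=> h hp; rewrite /D; apply: MP_sum => m _.
case hm: (m \in msupp p); last first.
  by rewrite mcoeff_outdom ?hm // scale0r; apply: MP0.
apply: MPZ; rewrite /Dmon; rewrite big_seq; apply: MP_sum => k hk.
refine (MP_mul (@MPU (fun x => x = divcm m (ucm k)) _ _ erefl)
                (@MPU (fun x => x = ucm k.+1) _ _ erefl) _).
by move=> m1 m2 -> ->; apply: h => //; apply: hp.
Qed.

Lemma divcmK (m : cm) k : k \in finsupp m -> (divcm m (ucm k) * ucm k)%M = m.
Proof.
rewrite -cmE_neq0 => hk; apply/eqP/cmP => i; rewrite cmM divcmE cmU.
have [<-|ne] := eqVneq k i; last by rewrite subn0 addn0.
by rewrite subnK // lt0n.
Qed.

Lemma D_VB k p : MP (VB k) p -> MP (VB k.+1) (D p).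
Proof.
apply: D_MP => m j hj hm; apply: VB_mul; last by apply: VBU; rewrite ltnS hm.
move=> i; rewrite -cmE_neq0 divcmE => hi; apply: ltnW; apply: hm.
by rewrite -cmE_neq0; apply: contra hi => /eqP ->.
Qed.

Lemma D_DG d p : MP (DG d) p -> MP (DG d) (D p).
Proof.
apply: D_MP => m j hj hm; rewrite /DG mdegM mdegU.
by move: hm; rewrite /DG -{1}(divcmK hj) mdegM mdegU.
Qed.

Lemma P_S m : P m.+2 = D (P m.+1) - 3%:R * mvar 0 * P m.+1.
Proof. by []. Qed.

Lemma P_inv i : [/\ MP (VB i) (P i.+1 - mvar i), MP (DG i.+1) (P i.+1) &
                    MP (VB i.+1) (P i.+1)].
Proof.
elim: i => [|i [h1 h2 h3]].
  rewrite /P /= subrr; split; [exact: MP0 | exact: MPDG_mvar | exact: MPVB_mvar].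
have e : P i.+2 - mvar i.+1 = D (P i.+1 - mvar i) - 3%:R * mvar 0 * P i.+1.
  by rewrite P_S DB D_mvar addrAC.
have hR : MP (VB i.+1) (P i.+2 - mvar i.+1).
  rewrite e; apply: MPB; first exact: D_VB.
  refine (MPVB_mul (MPVB_mul (@MPVB_nat _ _) (@MPVB_mvar _ _ (ltn0Sn i))) h3).
split=> //.
- rewrite P_S; apply: MPB; first by apply: MPDG_le (D_DG h2).
  have := MPDG_mul (MPDG_mul (@MPDG_nat 0 3) (@MPDG_mvar 1 0 (leqnn 1))) h2.
  by rewrite add0n add1n.
- rewrite -(subrK (mvar i.+1) (P i.+2)); apply: MPD; first exact: MPVB_le hR.
  exact: (@MPVB_mvar _ _ (ltnSn _)).
Qed.

Definition prodh (c : seq Pinf) (mo : cm) : Pinf := \prod_(k <- finsupp mo) (c`_k) ^+ (mo k).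

Lemma subst_MP (Q : cm -> Prop) c p :
  (forall m, m \in msupp p -> MP Q (prodh c m)) -> MP Q (subst c p).
Proof.
move=> h; rewrite /subst mmapE big_seq; apply: MP_sum => m hm.
refine (MP_mul (@MPC (fun x => x = 1%M) _ erefl) (h m hm) _).
by move=> m1 m2 -> hm2; rewrite mul1m.
Qed.

Lemma subst_C c (a : rat) : subst c a%:MP = a%:MP.
Proof.
rewrite /subst mmapU /= mdom1 big_seq_fset0 mulr1 //.
Qed.

Lemma prodh_VB k c (m : cm) : (forall j, j \in finsupp m -> MP (VB k) c`_j) -> MP (VB k) (prodh c m).
Proof.
move=> h; rewrite /prodh big_seq; elim/big_rec: _ => [|j x hj hx].
  by apply: MP1; apply: VB1.
apply: MPVB_mul hx; apply: MPX (h j hj) (VB1 k) _ => m1 m2; apply: VB_mul.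
Qed.

Lemma MPDG_X d p e : MP (DG d) p -> MP (DG (e * d)) (p ^+ e).
Proof.
move=> h; elim: e => [|e ih]; first by rewrite expr0; apply: MP1; rewrite /DG mdeg1.
by rewrite exprS mulSn; apply: MPDG_mul.
Qed.

Lemma prodh_DG_seq c (m : cm) (r : seq nat) : (forall j, j \in r -> MP (DG j.+1) c`_j) ->
  MP (DG (\sum_(j <- r) m j * j.+1)%N) (\prod_(j <- r) c`_j ^+ m j).
Proof.
elim: r => [|j r ih] h.
  by rewrite !big_nil; apply: MP1; rewrite /DG mdeg1.
rewrite !big_cons; apply: MPDG_mul; first exact: MPDG_X (h j (mem_head _ _)).
by apply: ih => i hi; apply: h; rewrite in_cons hi orbT.
Qed.

Lemma prodh_DG c (m : cm) : (forall j, j \in finsupp m -> MP (DG j.+1) c`_j) ->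
  MP (DG (sg m)) (prodh c m).
Proof. by move=> h; rewrite /prodh /sg /wsum; apply: prodh_DG_seq. Qed.
Lemma size_Chats S m : size (Chats S m) = m.
Proof. by elim: m => //= m ih; rewrite size_rcons ih. Qed.

Lemma nth_Chats S m k : (k < m)%N -> (Chats S m)`_k = Chat S k.+1.
Proof.
elim: m => // m ih hk; rewrite /= nth_rcons size_Chats.
case: ltnP => h; first by rewrite ih.
have -> : k = m by apply/eqP; rewrite eqn_leq h -ltnS hk.
by rewrite eqxx /Chat /= nth_rcons size_Chats ltnn eqxx.
Qed.

Lemma Chat_eq S n : Chat S n.+1 = Chat_step S n.+1 (Chats S n).
Proof. by rewrite /Chat /= nth_rcons size_Chats ltnn eqxx. Qed.

Lemma Snn_const S n : (1 <= n)%N -> S_spec S n -> S n n = (cc n.+1 / 2)%:MP.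
Proof.
move=> n1 hs; apply/malgP => a; rewrite mcoeffC.
have [->|a1] := eqVneq a 1%M; first by rewrite ?eqxx mulr1n Sn_top.
rewrite ?(negbTE a1) mulr0n; apply/eqP; rewrite mcoeff_eq0; apply/negP => ha.
have := S_bound n1 hs (leqnn n) ha a1; have := om_ge3 a1; lia.
Qed.

Lemma S_sg S n i : (1 <= n)%N -> S_spec S n -> (i <= n)%N ->
  MP (fun a => sg a + i <= n)%N (S n i).
Proof.
move=> n1 hs hi a ha; have [->|a1] := eqVneq a 1%M; first by rewrite /sg wsum1.
have := S_bound n1 hs hi ha a1; rewrite om_eq; have := mdeg_ne1 a1; lia.
Qed.

Lemma MPDG_msize d p : MP (DG d) p -> (msize p <= d.+1)%N.
Proof.
move=> h; rewrite msizeE big_seq.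
apply: (big_ind (fun x => x <= d.+1)%N) => //.
by move=> x y hx hy; rewrite geq_max hx hy.
Qed.

Lemma step S (hS : forall m : nat, (1 <= m)%N -> S_spec S m) n :
  (forall m, (1 <= m)%N -> (m < n.+1)%N -> MP (VB m) (Chat S m) /\ MP (DG m) (Chat S m)) ->
  exists F, [/\ MP (VB n) F, MP (DG n.+1) F &
    Chat S n.+1 = F + ((-1) ^+ n / n`!%:R : rat) *: mvar n].
Proof.
move=> ih.
pose c := Chats S n.
have hc : forall k, (k < n)%N -> MP (VB k.+1) c`_k /\ MP (DG k.+1) c`_k.
  by move=> k hk; rewrite /c nth_Chats //; apply: ih.
have hspec := hS n.+1 isT.
have sub_VB : forall i, (i <= n.+1)%N -> MP (VB n) (subst c (S n.+1 i)).
  move=> i hi; apply: subst_MP => m hm; apply: prodh_VB => j hj.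
  have hjn : (j < n)%N by have [hv _] := hspec; exact: (hv i hi m hm j hj).
  exact: MPVB_le (hc j hjn).1.
have sub_DG : forall i, (i <= n.+1)%N ->
    MP (fun x => mdeg x + i <= n.+1)%N (subst c (S n.+1 i)).
  move=> i hi; apply: subst_MP => m hm.
  have hsg := @S_sg S n.+1 i isT hspec hi m hm.
  have hp : MP (DG (sg m)) (prodh c m).
    apply: prodh_DG => j hj; apply: (hc j _).2.
    by have [hv _] := hspec; exact: (hv i hi m hm j hj).
  by apply: MP_le hp => x; rewrite /DG; lia.
pose kap : rat := (-1) ^+ n / n`!%:R.
have hq : ((3 * 2 ^ n.+1)%N%:R : rat) * (cc n.+2 / 2) = kap.
  rewrite cc_closed natrM natrX /kap.
  have h1 : (n`!%:R : rat) != 0 by rewrite pnatr_eq0 -lt0n fact_gt0.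
  by rewrite exprS; field; rewrite h1 expf_neq0.
have hk : ((3 * 2 ^ n.+1)%N%:R : Pinf) * (cc n.+2 / 2)%:MP = kap%:MP.
  by rewrite -mpolyC_nat -rmorphM hq.
have [hR1 hR2 _] := P_inv n.
exists (- subst c (S n.+1 0%N)
        + \sum_(1 <= i < n.+1) (3 * 2 ^ i)%N%:R * subst c (S n.+1 i) * P i
        + kap%:MP * (P n.+1 - mvar n)); split.
- apply: MPD; last by apply: MPVB_mul (@MPVB_C _ _) hR1.
  apply: MPD; first by apply: MPN; apply: sub_VB.
  rewrite big_nat_cond; apply: MP_sum => i /andP [/andP [i1 i2] _].
  apply: MPVB_mul; first by apply: MPVB_mul (@MPVB_nat _ _) (sub_VB _ (ltnW i2)).
  case: i i1 i2 => // i _ i2; have [_ _ h3] := P_inv i.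
  exact: MPVB_le h3.
- apply: MPD; last first.
    apply: MPDG_le (MPDG_mul (@MPDG_C 0 kap) (MPB hR2 (@MPDG_mvar n.+1 n isT))) => //.
  apply: MPD; first by apply: MPN; apply: MP_le (sub_DG 0%N isT) => x; rewrite /DG addn0.
  rewrite big_nat_cond; apply: MP_sum => i /andP [/andP [i1 i2] _].
  case: i i1 i2 => // i _ i2; have [_ h2 _] := P_inv i.
  refine (@MP_mul (fun x => (mdeg x + i.+1 <= n.+1)%N) _ _ _ _
           (MP_mul (@MPDG_nat 0 _) (sub_DG _ (ltnW i2)) _) h2 _).
    by move=> m1 m2; rewrite /DG mdegM; lia.
  by move=> m1 m2; rewrite /DG mdegM; lia.
- rewrite Chat_eq /Chat_step -/c big_nat_recr //= Snn_const // subst_C hk -/kap.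
  by rewrite -mul_malgC mulrBr !addrA subrK.
Qed.

Lemma inv_all S (hS : forall m : nat, (1 <= m)%N -> S_spec S m) n :
  (1 <= n)%N -> MP (VB n) (Chat S n) /\ MP (DG n) (Chat S n).
Proof.
elim/ltn_ind: n => n ih n1.
case: n ih n1 => // n ih _.
have [F [h1 h2 ->]] := step hS (fun m m1 mn => ih m mn m1).
split.
  exact: (MPD (MPVB_le (leqnSn n) h1) (@MPZ _ _ _ (@MPVB_mvar _ _ (ltnSn n)))).
exact: (MPD h2 (@MPZ _ _ _ (@MPDG_mvar n.+1 n isT))).
Qed.

Local Close Scope fset_scope.
Local Open Scope ring_scope.
Unset Implicit Arguments.

Theorem proposition4p4 (S : nat -> nat -> Pinf) :
  (forall m : nat, (1 <= m)%N -> S_spec S m) ->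
  forall n : nat, (1 <= n)%N ->
  exists F : Pinf,
    vars_below n.-1 F /\ tot_deg_le n F /\
    Chat S n = F + ((-1) ^+ n.-1 / (n.-1)`!%:R : rat) *: mvar n.-1.
Proof.
move=> hS n n1; case: n n1 => // n _.
have [F [h1 h2 h3]] := @step S hS n (fun m m1 _ => @inv_all S hS m m1).
by exists F; split=> //; split=> //; apply: MPDG_msize.
Qed.
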